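(* Let $k\ge2$, let $f:(k+1)^V\to\mathbb{R}_{\ge0}$ be non-negative, monotone and $k$-submodular with multilinear extension $F$, let $OPT=\max_{S\in(k+1)^V}f(S)$, and let $c>0$. Consider the meta-framework with step $\delta=1/N$, and suppose that at every iteration $t$ the direction $v(t)$ satisfies, with $y=\nabla F(s(t))$: for every $a\in\mathbb{R}^{n\times k}$ with $0\le a_{i,j}\le y_{i,j}$ for all $i,j$, and every map $j^*:[n]\to[k]$, $$\sum_{i\in[n]}\sum_{j\in[k]}v_{i,j}(t)\big(a_{i,j^*(i)}-a_{i,j}\big)\ \le\ c\sum_{i\in[n]}\sum_{j\in[k]}v_{i,j}(t)\,y_{i,j}.$$ Then for every $\varepsilon>0$ there is $N_0$ such that for all $N\ge N_0$ the output satisfies $F(s(N))\ge\frac{1}{c+1}OPT-\varepsilon$.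
   Context: Let $V=[n]=\{1,\dots,n\}$ and let $k\ge 1$ be an integer. Write $(k+1)^V$ for the set of $k$-tuples $S=(S_1,\dots,S_k)$ of pairwise disjoint subsets of $V$. For $S,T\in(k+1)^V$ let $S\sqcap T=(S_1\cap T_1,\dots,S_k\cap T_k)$ and let $S\sqcup T$ be the tuple whose $j$-th component is $(S_j\cup T_j)\setminus\bigcup_{l\neq j}(S_l\cup T_l)$. A function $f:(k+1)^V\to\mathbb{R}$ is $k$-submodular if $f(S)+f(T)\ge f(S\sqcap T)+f(S\sqcup T)$ for all $S,T\in(k+1)^V$. Write $S\preceq T$ if $S_j\subseteq T_j$ for all $j$; $f$ is monotone if $S\preceq T$ implies $f(S)\le f(T)$. Let $\mathcal P=\{x\in[0,1]^{n\times k}:\sum_{j=1}^k x_{i,j}\le 1\ \forall i\in[n]\}$. The multilinear extension of $f$ is the polynomial $F(x)=\sum_{S\in(k+1)^V} f(S_1,\dots,S_k)\Big(\prod_{j\in[k]}\prod_{i\in S_j}x_{i,j}\Big)\prod_{i\in V\setminus\bigcup_j S_j}\Big(1-\sum_{j=1}^k x_{i,j}\Big)$, considered on $\mathcal P$. Meta-framework: fix a positive integer $N$ and $\delta=1/N$. Set $s(0)=0\in\mathbb{R}^{n\times k}$. For $t=0,1,\dots,N-1$, choose a direction $v(t)\in[0,1]^{n\times k}$ with $\sum_{j=1}^k v_{i,j}(t)=1$ for every $i\in[n]$ (the choice may depend on $s(t)$ and on $F$), and set $s(t+1)=s(t)+\delta\,v(t)$. The output is $s(N)$. *)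

(* Defs.v *)
From HB Require Import structures.
From mathcomp Require Import all_boot all_order all_algebra.
From mathcomp Require Import all_classical all_reals.
From mathcomp Require Import topology normedtype derive.
Set Implicit Arguments. Unset Strict Implicit. Unset Printing Implicit Defensive.
Import Order.TTheory GRing.Theory Num.Theory numFieldNormedType.Exports.
Local Open Scope ring_scope.

(* Elements of (k+1)^V, V = [n], encoded as assignments
   S : 'I_n -> option 'I_k, where S i = Some j  <->  i \in S_j,
   and S i = None <-> i is in no S_j.  (Bijective with k-tuples of
   pairwise disjoint subsets of V.) *)
Definition kset (n k : nat) := {ffun 'I_n -> option 'I_k}.

Definition kcomp n k (S : kset n k) (j : 'I_k) : {set 'I_n} :=
  [set i | S i == Some j].

(* S ⊓ T : component j is S_j ∩ T_j *)
Definition kmeet n k (S T : kset n k) : kset n k :=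
  [ffun i => if S i == T i then S i else None].

(* S ⊔ T : component j is (S_j ∪ T_j) minus ⋃_{l<>j} (S_l ∪ T_l) *)
Definition kjoin n k (S T : kset n k) : kset n k :=
  [ffun i => match S i, T i with
             | None, t => t
             | s, None => s
             | Some a, Some b => if a == b then Some a else None
             end].

Definition ksubmodular (R : realType) n k (f : kset n k -> R) : Prop :=
  forall S T, f (kmeet S T) + f (kjoin S T) <= f S + f T.

Definition kle n k (S T : kset n k) : Prop :=
  forall j, kcomp S j \subset kcomp T j.

Definition kmonotone (R : realType) n k (f : kset n k -> R) : Prop :=
  forall S T, kle S T -> f S <= f T.

Definition multilinear_ext (R : realType) n k (f : kset n k -> R)
  (x : 'M[R]_(n, k)) : R :=
  \sum_(S : kset n k) f S *
    \prod_(i < n) (match S i with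
                   | Some j => x i j
                   | None => 1 - \sum_(j < k) x i j
                   end).

Definition partial (R : realType) n k (F : 'M[R]_(n, k) -> R)
  (x : 'M[R]_(n, k)) (i : 'I_n) (j : 'I_k) : R :=
  derive1 (fun t : R => F (x + t *: delta_mx i j)) 0.

Definition gradient (R : realType) n k (F : 'M[R]_(n, k) -> R)
  (x : 'M[R]_(n, k)) : 'M[R]_(n, k) :=
  \matrix_(i, j) partial F x i j.

(* OPT = max_S f(S)  (f is nonnegative, so 0 is a harmless default) *)
Definition OPT (R : realType) n k (f : kset n k -> R) : R :=
  \big[Num.max/0]_(S : kset n k) f S.

Definition traj (R : realType) n k (N : nat) (v : nat -> 'M[R]_(n, k))
  (t : nat) : 'M[R]_(n, k) :=
  \sum_(u < t) (N%:R)^-1 *: v u.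

Definition direction (R : realType) n k (w : 'M[R]_(n, k)) : Prop :=
  (forall i j, 0 <= w i j <= 1) /\ (forall i, \sum_(j < k) w i j = 1).

Definition good_direction (R : realType) n k (c : R)
  (y w : 'M[R]_(n, k)) : Prop :=
  forall (a : 'M[R]_(n, k)),
    (forall i j, 0 <= a i j <= y i j) ->
    forall (jstar : 'I_n -> 'I_k),
      \sum_(i < n) \sum_(j < k) w i j * (a i (jstar i) - a i j)
      <= c * \sum_(i < n) \sum_(j < k) w i j * y i j.

(* Main.v *)
Require Import Defs.
From HB Require Import structures.
From mathcomp Require Import all_boot all_order all_algebra.
From mathcomp Require Import all_classical all_reals.
From mathcomp Require Import topology normedtype derive.
From mathcomp Require Import ring lra.
Import Order.TTheory GRing.Theory Num.Theory numFieldNormedType.Exports.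
Local Open Scope ring_scope.

Lemma prod_err (R : realType) (I : eqType) (rs : seq I) (a b : I -> R) (be : R) :
  uniq rs -> 0 <= be ->
  (forall i, `|a i| <= 1) -> (forall i, `|a i + b i| <= 1) -> (forall i, `|b i| <= be) ->
  [/\ `|\prod_(l <- rs) (a l + b l)| <= 1,
      `|\prod_(l <- rs) (a l + b l) - \prod_(l <- rs) a l| <= (size rs)%:R * be &
      `|\prod_(l <- rs) (a l + b l) - \prod_(l <- rs) a l
          - \sum_(i <- rs) b i * \prod_(l <- rs | l != i) a l|
        <= ((size rs)^2)%:R * be^2].
Proof.
move=> + b0 ha hab hb; elim: rs => [|x rs IH] /=.
  by rewrite !big_nil; split; rewrite ?subrr ?sub0r ?normrN ?normr0 ?normr1 /= ?mul0r.
move=> /andP [xr ur]; have [H1 H2 H3] := IH ur.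
have E1 : \prod_(l <- x :: rs | l != x) a l = \prod_(l <- rs) a l.
  rewrite big_cons eqxx /= big_seq_cond [RHS]big_seq; apply: eq_bigl => l.
  case lr: (l \in rs) => //=; apply/eqP => lx; move: xr; by rewrite -lx lr.
have E2 : \sum_(i <- rs) b i * \prod_(l <- x :: rs | l != i) a l =
          a x * \sum_(i <- rs) b i * \prod_(l <- rs | l != i) a l.
  rewrite mulr_sumr big_seq [RHS]big_seq; apply: eq_bigr => i ir.
  rewrite big_cons.
  have -> : (x != i) by apply/eqP => xi; move: xr; rewrite xi ir.
  by rewrite mulrCA.
rewrite [\sum_(i <- x :: rs) _]big_cons E1 E2 !big_cons.
set P := \prod_(l <- rs) (a l + b l) in H1 H2 H3 *.
set A := \prod_(l <- rs) a l in H2 H3 *.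
set L := \sum_(i <- rs) b i * \prod_(l <- rs | l != i) a l in H3 *.
set m := (size rs)%:R in H2.
have m0 : 0 <= m by rewrite /m ler0n.
have Hm2 : ((size rs)^2)%:R = m^2 by rewrite /m natrX.
rewrite Hm2 in H3.
have hax := ha x; have hbx := hb x; have habx := hab x.
have nP := normr_ge0 P; have nPA := normr_ge0 (P - A); have nax := normr_ge0 (a x).
have nbx := normr_ge0 (b x); have nE := normr_ge0 (P - A - L).
have -> : ((size rs).+1 ^ 2)%:R = (m + 1)^2 by rewrite /m natrX -natr1.
have -> : (size rs).+1%:R = m + 1 by rewrite /m -natr1.
split.
- by rewrite normrM; nra.
- have -> : (a x + b x) * P - a x * A = a x * (P - A) + b x * P by ring.
  apply: (le_trans (ler_normD _ _)); rewrite !normrM; nra.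
- have -> : (a x + b x) * P - a x * A - (b x * A + a x * L) =
            a x * (P - A - L) + b x * (P - A) by ring.
  apply: (le_trans (ler_normD _ _)); rewrite !normrM.
  have : 0 <= m * be^2 by apply: mulr_ge0 => //; apply: sqr_ge0.
  nra.
Qed.


Section Proof.
Variables (R : realType) (n k : nat).
Implicit Types (S : kset n k) (i l r : 'I_n) (j m : 'I_k) (o : option 'I_k) (h : kset n k -> R) (q : 'I_n -> option 'I_k -> R) (x y : 'M[R]_(n,k)).

Definition E h q : R := \sum_(S : kset n k) h S * \prod_(i < n) q i (S i).
Definition setrow q (i : 'I_n) (g : option 'I_k -> R) : 'I_n -> option 'I_k -> R :=
  fun r => if r == i then g else q r.
Definition phi x : 'I_n -> option 'I_k -> R := fun i o =>
  match o with Some j => x i j | None => 1 - \sum_(j < k) x i j end.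
Definition dd (j : 'I_k) (o : option 'I_k) : R :=
  match o with Some j' => (j' == j)%:R | None => -1 end.
Definition upd (S : kset n k) (i : 'I_n) (o : option 'I_k) : kset n k :=
  [ffun r => if r == i then o else S r].

Lemma E_ext h q q' : (forall r o, q r o = q' r o) -> E h q = E h q'.
Proof.
by move=> H; apply: eq_bigr => S _; congr (_ * _); apply: eq_bigr => r _; rewrite H.
Qed.

Lemma E_row h q i g : E h (setrow q i g) =
  \sum_S h S * (g (S i) * \prod_(r | r != i) q r (S r)).
Proof.
apply: eq_bigr => S _; congr (_ * _).
rewrite (bigD1 i) //= /setrow eqxx; congr (_ * _).
by apply: eq_bigr => r /negbTE ->.
Qed.

Lemma E_lin h q i (g0 : option 'I_k -> R) (c : 'I_k -> R) (g : 'I_k -> option 'I_k -> R) :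
  E h (setrow q i (fun o => g0 o + \sum_m c m * g m o)) =
  E h (setrow q i g0) + \sum_m c m * E h (setrow q i (g m)).
Proof.
rewrite !E_row.
rewrite [X in _ = _ + X](eq_bigr (fun m => \sum_S c m * (h S * (g m (S i) * \prod_(r | r != i) q r (S r))))); last first.
  by move=> m _; rewrite E_row mulr_sumr.
rewrite [in RHS]exchange_big -big_split /=.
apply: eq_bigr => S _.
rewrite mulrDl mulrDr; congr (_ + _).
rewrite mulr_suml mulr_sumr; apply: eq_bigr => m _; ring.
Qed.

Lemma E_self h q i : E h (setrow q i (q i)) = E h q.
Proof. by apply: E_ext => r o; rewrite /setrow; case: eqP => // ->. Qed.

Lemma upd_same S i o : upd S i o i = o.
Proof. by rewrite ffunE eqxx. Qed.
Lemma upd_other S i o r : r != i -> upd S i o r = S r.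
Proof. by rewrite ffunE => /negbTE ->. Qed.
Lemma upd_id S i : upd S i (S i) = S.
Proof. by apply/ffunP => r; rewrite ffunE; case: eqP => // ->. Qed.
Lemma upd_upd S i a b : upd (upd S i a) i b = upd S i b.
Proof. by apply/ffunP => r; rewrite !ffunE; case: eqP. Qed.

Definition swo (o a : option 'I_k) : option 'I_k :=
  if a == None then o else if a == o then None else a.
Lemma swoK o : involutive (swo o).
Proof.
move=> a; rewrite /swo.
case: (eqVneq a None) => [->|aN].
  by case: (eqVneq o None) => [->|oN]; rewrite ?eqxx // (negbTE oN) eqxx.
case: (eqVneq a o) => [->|ao]; first by rewrite eqxx.
by rewrite (negbTE aN) (negbTE ao).
Qed.

Lemma swo_eq o a : (swo o a == o) = (a == None).
Proof.
rewrite /swo.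
case: (eqVneq a None) => [_|aN]; first by rewrite /= eqxx.
case: (eqVneq a o) => [ao|ao].
  by subst o; rewrite /= eq_sym (negbTE aN).
by rewrite /= (negbTE ao).
Qed.

Definition sw i o (S : kset n k) : kset n k := upd S i (swo o (S i)).
Lemma sw_inj i o : injective (sw i o).
Proof.
have K : cancel (sw i o) (sw i o).
  by move=> S; rewrite /sw upd_same upd_upd swoK upd_id.
exact: can_inj K.
Qed.

Lemma split_sum (i : 'I_n) (g : kset n k -> R) :
  \sum_S g S = \sum_(S : kset n k | S i == None) \sum_o g (upd S i o).
Proof.
rewrite exchange_big /=.
rewrite [LHS](partition_big (fun S : kset n k => S i) (xpredT : pred (option 'I_k))) //=.
apply: eq_bigr => o _.
rewrite (reindex_inj (sw_inj i o)) /=.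
apply: eq_big => S; rewrite /sw upd_same ?swo_eq //.
by move=> /eqP ->.
Qed.

Lemma sum_dd j (X : option 'I_k -> R) : \sum_o X o * dd j o = X (Some j) - X None.
Proof.
rewrite (bigD1 None) //= (bigD1 (Some j)) //= big1 /=.
  by rewrite eqxx mulr1 addr0 mulrN1 addrC.
case=> [j'|] //= H.
have -> : (j' == j) = false by apply/negbTE; apply: contra H => /eqP ->.
by rewrite mulr0.
Qed.

Lemma E_dd h q i j :
  E h (setrow q i (dd j)) =
  \sum_(S : kset n k | S i == None) (h (upd S i (Some j)) - h S) * \prod_(r | r != i) q r (S r).
Proof.
rewrite E_row (split_sum i).
apply: eq_bigr => S /eqP HS.
transitivity (\sum_o h (upd S i o) * dd j o * \prod_(r | r != i) q r (S r)).
  apply: eq_bigr => o _; rewrite -mulrA; congr (_ * (_ * _)).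
    by congr dd; exact: upd_same.
  by apply: eq_bigr => r ri; congr q; exact: upd_other.
rewrite -mulr_suml sum_dd; congr ((_ - h _) * _).
by rewrite -HS; exact: upd_id.
Qed.


Lemma upd_kle S i j : S i = None -> kle S (upd S i (Some j)).
Proof.
move=> HS j'; apply/fintype.subsetP => r; rewrite !inE ffunE.
case: (eqVneq r i) => [ri|//]; subst r.
by rewrite HS.
Qed.

Lemma E_dd_ge0 h q i j : kmonotone h -> (forall r o, r != i -> 0 <= q r o) ->
  0 <= E h (setrow q i (dd j)).
Proof.
move=> hm hq; rewrite E_dd; apply: sumr_ge0 => S /eqP HS.
apply: mulr_ge0; first by rewrite subr_ge0; apply: hm; apply: upd_kle.
by apply: prodr_ge0 => r ri; apply: hq.
Qed.

Lemma sub2 h S i l j m : ksubmodular h -> i != l -> S i = None -> S l = None ->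
  h (upd (upd S i (Some j)) l (Some m)) - h (upd S i (Some j))
   - (h (upd S l (Some m)) - h S) <= 0.
Proof.
move=> hs il Si Sl.
have := hs (upd S i (Some j)) (upd S l (Some m)).
have -> : kmeet (upd S i (Some j)) (upd S l (Some m)) = S.
  apply/ffunP => r; rewrite !ffunE.
  case: (eqVneq r i) => [ri|ri].
    subst r; rewrite (negbTE il) Si /=; done.
  case: (eqVneq r l) => [rl|rl].
    by subst r; rewrite Sl.
  by rewrite eqxx.
have -> : kjoin (upd S i (Some j)) (upd S l (Some m)) = upd (upd S i (Some j)) l (Some m).
  apply/ffunP => r; rewrite !ffunE.
  case: (eqVneq r i) => [ri|ri].
    by subst r; rewrite (negbTE il) Si /=.
  case: (eqVneq r l) => [rl|rl].
    by subst r; rewrite Sl.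
  by case: (S r) => // a; rewrite eqxx.
move=> H; lra.
Qed.

Lemma E_dd2 h q i l j m : ksubmodular h -> i != l ->
  (forall r o, r != i -> r != l -> 0 <= q r o) ->
  E h (setrow (setrow q i (dd j)) l (dd m)) <= 0.
Proof.
move=> hs il hq.
rewrite E_dd.
pose h' (S : kset n k) := if S l == None then h (upd S l (Some m)) - h S else 0.
pose q' := setrow q l (fun _ => 1).
have -> : \sum_(S : kset n k | S l == None) (h (upd S l (Some m)) - h S) *
     \prod_(r | r != l) setrow q i (dd j) r (S r) = E h' (setrow q' i (dd j)).
  rewrite big_mkcond; apply: eq_bigr => S _.
  rewrite /h' [X in _ = _ * X](bigD1 l) //=.
  have li : l != i by rewrite eq_sym.
  have -> : setrow q' i (dd j) l = fun _ => 1.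
    by rewrite /setrow (negbTE li) /q' /setrow eqxx.
  rewrite mul1r; case: ifP => _; last by rewrite mul0r.
  congr (_ * _); apply: eq_bigr => r rl.
  by rewrite /setrow /q' /setrow (negbTE rl).
rewrite E_dd; apply: sumr_le0 => S /eqP Si.
apply: mulr_le0_ge0; last first.
  apply: prodr_ge0 => r ri; rewrite /q' /setrow.
  by case: ifP => [//|/negbT rl]; apply: hq.
rewrite /h' upd_other 1?eq_sym //.
case: (eqVneq (S l) None) => [Sl|Sl]; last by rewrite subrr.
exact: sub2.
Qed.

Definition Dm h x i j : R := E h (setrow (phi x) i (dd j)).

Lemma phi_diff x x' l o :
  phi x' l o = phi x l o + \sum_m (x' l m - x l m) * dd m o.
Proof.
case: o => [j|] /=.
  rewrite (bigD1 j) //= eqxx mulr1 big1 ?addr0; first by ring.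
  by move=> m mj; rewrite eq_sym (negbTE mj) mulr0.
rewrite [X in _ = _ + X](eq_bigr (fun m => - (x' l m - x l m))); last by move=> m _; rewrite mulrN1.
rewrite sumrN sumrB; ring.
Qed.

Lemma onerow h x x' l : (forall r j, r != l -> x' r j = x r j) ->
  E h (phi x') = E h (phi x) + \sum_m (x' l m - x l m) * Dm h x l m.
Proof.
move=> H.
rewrite -[E h (phi x)](E_self h (phi x) l) /Dm -E_lin.
apply: E_ext => r o; rewrite /setrow; case: eqP => [->|/eqP rl].
  exact: phi_diff.
case: o => [j|] /=; first by rewrite H.
by congr (_ - _); apply: eq_bigr => j _; rewrite H.
Qed.

Lemma partial_eq h x i j : partial (multilinear_ext h) x i j = Dm h x i j.
Proof.
rewrite /partial.
have -> : (fun t : R => multilinear_ext h (x + t *: delta_mx i j)) =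
          (fun t => E h (phi x) + t * Dm h x i j).
  apply: funext => t.
  change (E h (phi (x + t *: delta_mx i j)) = E h (phi x) + t * Dm h x i j).
  rewrite (onerow h x (x + t *: delta_mx i j) i); last first.
    by move=> r j' ri; rewrite !mxE (negbTE ri) /= mulr0 addr0.
  congr (_ + _); rewrite (bigD1 j) //= big1 ?addr0.
    by rewrite !mxE !eqxx /= mulr1 addrC addrK.
  by move=> m mj; rewrite !mxE eqxx /= (negbTE mj) mulr0 addr0 subrr mul0r.
rewrite derive1E.
have HD : is_derive (0:R) 1 (fun t : R => E h (phi x) + t * Dm h x i j) (Dm h x i j).
  apply: is_derive_eq.
  by rewrite scale0r !add0r /GRing.scale /= mulr1.
exact: derive_val.
Qed.

Definition inP x := (forall i j, 0 <= x i j) /\ (forall i, \sum_j x i j <= 1).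

Lemma phi_bounds x i o : inP x -> 0 <= phi x i o <= 1.
Proof.
move=> [H0 H1]; case: o => [j|] /=.
  rewrite H0 /=; apply: le_trans (H1 i).
  rewrite (bigD1 j) //= lerDl; apply: sumr_ge0 => m _; exact: H0.
rewrite subr_ge0 H1 /= lerBlDr lerDl; apply: sumr_ge0 => m _; exact: H0.
Qed.

Lemma phi_ge0 x i o : inP x -> 0 <= phi x i o.
Proof. by move=> H; case/andP: (phi_bounds x i o H). Qed.

Lemma Dm_ge0 h x i j : kmonotone h -> inP x -> 0 <= Dm h x i j.
Proof. by move=> hm hx; apply: E_dd_ge0 => // r o _; apply: phi_ge0. Qed.

Lemma Dm_row h x x' l i j : ksubmodular h -> inP x -> inP x' ->
  (forall r j, r != l -> x' r j = x r j) -> (forall j, x l j <= x' l j) ->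
  Dm h x' i j <= Dm h x i j.
Proof.
move=> hs hx hx' H Hl.
case: (eqVneq l i) => [li|li].
  subst l; rewrite le_eqVlt; apply/orP; left; apply/eqP; rewrite /Dm.
  by apply: E_ext => r o; rewrite /setrow; case: eqP => // /eqP ri;
     case: o => [j'|] /=; rewrite ?H //; congr (_ - _); apply: eq_bigr => m _; rewrite H.
have -> : Dm h x' i j = E h (setrow (setrow (phi x) i (dd j)) l
             (fun o => setrow (phi x) i (dd j) l o + \sum_m (x' l m - x l m) * dd m o)).
  apply: E_ext => r o; rewrite /setrow.
  case: (eqVneq r l) => [rl|rl].
    by subst r; rewrite (negbTE li) (phi_diff x).
  case: (eqVneq r i) => // _.
  case: o => [j'|] /=; rewrite ?H //; congr (_ - _); by apply: eq_bigr => m _; rewrite H.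
rewrite (_ : E h _ = Dm h x i j + \sum_m (x' l m - x l m) *
            E h (setrow (setrow (phi x) i (dd j)) l (dd m))); last first.
  by rewrite /Dm -(E_self h (setrow (phi x) i (dd j)) l); exact: E_lin.
rewrite -[X in _ <= X]addr0 lerD2l; apply: sumr_le0 => m _.
apply: mulr_ge0_le0; first by rewrite subr_ge0.
apply: E_dd2 => //; first by rewrite eq_sym.
by move=> r o _ _; apply: phi_ge0.
Qed.

Definition hyb x x' (p : nat) : 'M[R]_(n,k) :=
  \matrix_(r, j) if (r < p)%N then x' r j else x r j.

Lemma Dm_anti h x x' i j : ksubmodular h -> inP x -> inP x' ->
  (forall r j, x r j <= x' r j) -> Dm h x' i j <= Dm h x i j.
Proof.
move=> hs hx hx' Hle.
have hP p : inP (hyb x x' p).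
  split.
    move=> r j'; rewrite mxE; case: ifP => _; [by case: hx' | by case: hx].
  move=> r; under eq_bigr do rewrite mxE.
  by case: (r < p)%N; [case: hx' | case: hx].
have H0 : hyb x x' 0 = x by apply/matrixP => r j'; rewrite mxE.
have Hn : hyb x x' n = x' by apply/matrixP => r j'; rewrite mxE ltn_ord.
suff : forall p, (p <= n)%N -> Dm h (hyb x x' p) i j <= Dm h x i j.
  by move/(_ n (leqnn n)); rewrite Hn.
elim=> [|p IH] Hp; first by rewrite H0.
apply: le_trans (IH (ltnW Hp)).
apply: (Dm_row h _ _ (Ordinal Hp)) => //.
  move=> r j' rp; rewrite !mxE.
  have : (nat_of_ord r != p) by apply: contra rp => /eqP rp; apply/eqP/val_inj.
  by rewrite ltnS leq_eqVlt => /negbTE ->.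
by move=> j'; rewrite !mxE /= ltnSn ltnn.
Qed.

Definition Kc h : R :=
  \sum_S `|h S| * (((size (index_enum 'I_n))^2)%:R * (k%:R)^2).

Lemma lin_id h x (w : 'M[R]_(n,k)) : \sum_i \sum_j w i j * Dm h x i j =
  \sum_S h S * \sum_i (\sum_j w i j * dd j (S i)) * \prod_(l | l != i) phi x l (S l).
Proof.
rewrite /Dm.
under eq_bigr => i _ do under eq_bigr => j _ do rewrite E_row mulr_sumr.
under eq_bigr => i _ do rewrite exchange_big.
rewrite exchange_big; apply: eq_bigr => S _; rewrite mulr_sumr.
apply: eq_bigr => i _; rewrite mulr_suml mulr_sumr; apply: eq_bigr => j _; ring.
Qed.

Lemma dd_norm j o : `|dd j o| <= 1.
Proof.
case: o => [j'|] /=; last by rewrite normrN normr1.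
by case: (j' == j); rewrite ?normr1 ?normr0.
Qed.

Lemma step h x w (d : R) : 0 <= d -> inP x -> inP (x + d *: w) ->
  (forall i j, `|w i j| <= 1) ->
  `|E h (phi (x + d *: w)) - E h (phi x) - d * \sum_i \sum_j w i j * Dm h x i j|
    <= Kc h * d^2.
Proof.
move=> d0 hx hx' hw.
rewrite lin_id mulr_sumr /E -!sumrB.
apply: le_trans (ler_norm_sum _ _ _) _.
rewrite /Kc mulr_suml; apply: ler_sum => S _.
pose a := fun l => phi x l (S l).
pose b := fun l => d * \sum_j w l j * dd j (S l).
have hab l : phi (x + d *: w) l (S l) = a l + b l.
  rewrite (phi_diff x) /a /b mulr_sumr; congr (_ + _); apply: eq_bigr => j _.
  by rewrite !mxE; ring.
have E1 : \prod_i phi (x + d *: w) i (S i) = \prod_l (a l + b l).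
  by apply: eq_bigr => l _; exact: hab.
have E2 : d * (h S * \sum_i (\sum_j w i j * dd j (S i)) * \prod_(l | l != i) phi x l (S l))
          = h S * \sum_i b i * \prod_(l | l != i) a l.
  by rewrite mulrCA; congr (_ * _); rewrite mulr_sumr; apply: eq_bigr => i _; rewrite mulrA.
rewrite E1 E2 -mulrBr -mulrBr normrM -mulrA; apply: ler_wpM2l; first exact: normr_ge0.
have ha l : `|a l| <= 1.
  by have /andP[H1 H2] := phi_bounds x l (S l) hx; rewrite ger0_norm.
have hab' l : `|a l + b l| <= 1.
  by rewrite -hab; have /andP[H1 H2] := phi_bounds (x + d *: w) l (S l) hx';
     rewrite ger0_norm.
have hb l : `|b l| <= d * k%:R.
  rewrite /b normrM (ger0_norm d0); apply: ler_wpM2l => //.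
  apply: le_trans (ler_norm_sum _ _ _) _.
  rewrite -[k in k%:R]card_ord -sumr_const; apply: ler_sum => j _.
  rewrite normrM -[1]mulr1; apply: ler_pM => //; exact: dd_norm.
have k0 : 0 <= d * k%:R by apply: mulr_ge0.
have [_ _ H3] := prod_err R _ (index_enum 'I_n) a b (d * k%:R) (index_enum_uniq _) k0 ha hab' hb.
apply: le_trans H3 _; rewrite le_eqVlt; apply/orP; left; apply/eqP; ring.
Qed.

Lemma traj_entry N (v : nat -> 'M[R]_(n,k)) t i j : traj N v t i j = \sum_(u < t) N%:R^-1 * v u i j.
Proof. by rewrite /traj summxE; apply: eq_bigr => u _; rewrite mxE. Qed.

Lemma trajS N (v : nat -> 'M[R]_(n,k)) t : traj N v t.+1 = traj N v t + N%:R^-1 *: v t.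
Proof. by rewrite /traj big_ord_recr. Qed.

Lemma traj_inP N (v : nat -> 'M[R]_(n,k)) t : (0 < N)%N -> (t <= N)%N ->
  (forall u, (u < N)%N -> direction (v u)) ->
  inP (traj N v t) /\ (forall i, \sum_j traj N v t i j = t%:R * N%:R^-1).
Proof.
move=> N0 tN hv.
have rs i : \sum_j traj N v t i j = t%:R * N%:R^-1.
  under eq_bigr do rewrite traj_entry.
  rewrite exchange_big /=.
  rewrite (eq_bigr (fun=> N%:R^-1)); last first.
    by move=> u _; rewrite -mulr_sumr (proj2 (hv u (leq_trans (ltn_ord u) tN)) i) mulr1.
  by rewrite sumr_const card_ord mulr_natl.
split=> //; split.
  move=> i j; rewrite traj_entry; apply: sumr_ge0 => u _; apply: mulr_ge0.
    by rewrite invr_ge0.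
  by case/andP: (proj1 (hv u (leq_trans (ltn_ord u) tN)) i j).
move=> i; rewrite rs ler_pdivrMr ?ltr0n // mul1r ler_nat //.
Qed.

Lemma E_ge0 h x : (forall S, 0 <= h S) -> inP x -> 0 <= E h (phi x).
Proof.
move=> h0 hx; apply: sumr_ge0 => S _; apply: mulr_ge0 => //.
by apply: prodr_ge0 => i _; apply: phi_ge0.
Qed.

Lemma entry_add x y (a : R) i j : (x + a *: y) i j = x i j + a * y i j.
Proof. by rewrite !mxE. Qed.
Lemma entry_sub x y i j : (x - y) i j = x i j - y i j.
Proof. by rewrite !mxE. Qed.
Lemma rowsum_add x y (a : R) i : \sum_j (x + a *: y) i j = \sum_j x i j + a * \sum_j y i j.
Proof. by rewrite mulr_sumr -big_split; apply: eq_bigr => j _; rewrite entry_add. Qed.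

Lemma main_bound h (c : R) N (v : nat -> 'M[R]_(n,k)) (J : 'I_n -> 'I_k) (e : 'M[R]_(n,k)) :
  kmonotone h -> ksubmodular h -> (forall S, 0 <= h S) -> 0 <= c -> (0 < N)%N ->
  (forall i j, e i j = (j == J i)%:R) ->
  (forall t, (t < N)%N -> direction (v t) /\
     good_direction c (gradient (multilinear_ext h) (traj N v t)) (v t)) ->
  E h (phi e) <= (c + 1) * E h (phi (traj N v N)) + (c + 1) * (Kc h * N%:R^-1).
Proof.
move=> hm hs h0 c0 N0 He hv.
have hdir u : (u < N)%N -> direction (v u) by move=> uN; case: (hv u uN).
set d := N%:R^-1.
have d0 : 0 <= d by rewrite invr_ge0.
pose s t := traj N v t.
pose O t := s t + (1 - t%:R * d) *: e.
have esum i : \sum_j e i j = 1.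
  rewrite (bigD1 (J i)) //= He eqxx big1 ?addr0 //.
  by move=> j /negbTE jJ; rewrite He jJ.
have e01 i j : 0 <= e i j <= 1 by rewrite He; case: (j == J i); rewrite ?ler01 ?lexx.
have sP t : (t <= N)%N -> inP (s t) by move=> tN; case: (traj_inP N v t N0 tN hdir).
have sR t : (t <= N)%N -> forall i, \sum_j s t i j = t%:R * d.
  by move=> tN; case: (traj_inP N v t N0 tN hdir).
have td t : (t <= N)%N -> t%:R * d <= 1.
  by move=> tN; rewrite ler_pdivrMr ?ltr0n // mul1r ler_nat.
have OP t : (t <= N)%N -> inP (O t).
  move=> tN; split.
    move=> i j; rewrite entry_add; apply: addr_ge0; first by case: (sP t tN).
    apply: mulr_ge0; first by rewrite subr_ge0 td.
    by case/andP: (e01 i j).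
  by move=> i; rewrite rowsum_add sR // esum mulr1 addrC subrK.
have sO t i j : (t <= N)%N -> s t i j <= O t i j.
  move=> tN; rewrite entry_add lerDl; apply: mulr_ge0; first by rewrite subr_ge0 td.
  by case/andP: (e01 i j).
have O0 : O 0%N = e.
  by rewrite /O /s /traj big_ord0 mul0r subr0 scale1r add0r.
have ON : O N = s N.
  by rewrite /O /d mulfV ?pnatr_eq0 -?lt0n // subrr scale0r addr0.
have OS t : O t.+1 = O t + d *: (v t - e).
  rewrite /O /s trajS; apply/matrixP => i j.
  rewrite !entry_add entry_sub -natr1 /d; ring.
have sS t : s t.+1 = s t + d *: v t by rewrite /s trajS.
pose K := Kc h.
have inv : forall t, (t <= N)%N ->
    E h (phi e) - E h (phi (O t)) <=
    c * (E h (phi (s t)) - E h (phi (s 0%N))) + (c + 1) * t%:R * (K * d^2).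
  elim=> [_|t IH tN]; first by rewrite O0 !subrr; lra.
  have tN' : (t <= N)%N := ltnW tN.
  have IH' := IH tN'.
  have [hdt gd] := hv t tN.
  pose D := Dm h (O t).
  pose g := \sum_i \sum_j v t i j * Dm h (s t) i j.
  pose g' := \sum_i \sum_j (v t - e) i j * D i j.
  have h1 : `|E h (phi (s t.+1)) - E h (phi (s t)) - d * g| <= K * d^2.
    rewrite sS; apply: step => //; first exact: sP.
      by rewrite -sS; exact: sP.
    move=> i j; case/andP: (proj1 hdt i j) => a0 a1.
    by rewrite ger0_norm.
  have h2 : `|E h (phi (O t.+1)) - E h (phi (O t)) - d * g'| <= K * d^2.
    rewrite OS; apply: step => //; first exact: OP.
      by rewrite -OS; exact: OP.
    move=> i j; rewrite entry_sub; case/andP: (proj1 hdt i j) => a0 a1.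
    case/andP: (e01 i j) => b0 b1.
    rewrite ler_norml; apply/andP; split; lra.
  have Ha : forall i j, 0 <= (\matrix_(i, j) D i j : 'M[R]_(n,k)) i j <=
                        gradient (multilinear_ext h) (traj N v t) i j.
    move=> i j; rewrite !mxE partial_eq; apply/andP; split.
      by apply: Dm_ge0 => //; exact: OP.
    apply: Dm_anti => //; [exact: sP | exact: OP | by move=> r j'; exact: sO].
  have h3 := gd _ Ha J.
  have h3' : \sum_i \sum_j v t i j * (D i (J i) - D i j) <= c * g.
    move: h3.
    under eq_bigr => i _ do under eq_bigr => j _ do rewrite !mxE.
    under [X in _ <= c * X]eq_bigr => i _ do under eq_bigr => j _ do rewrite !mxE partial_eq.
    by [].
  have key : g' = - \sum_i \sum_j v t i j * (D i (J i) - D i j).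
    rewrite /g' -sumrN; apply: eq_bigr => i _.
    have E1 : \sum_j e i j * D i j = D i (J i).
      rewrite (bigD1 (J i)) //= He eqxx mul1r big1 ?addr0 //.
      by move=> j /negbTE jJ; rewrite He jJ mul0r.
    have E2 : \sum_j v t i j * (D i (J i) - D i j) = D i (J i) - \sum_j v t i j * D i j.
      under eq_bigr do rewrite mulrBr.
      by rewrite sumrB -mulr_suml (proj2 hdt i) mul1r.
    under eq_bigr do rewrite entry_sub mulrBl.
    by rewrite sumrB E1 E2 opprB.
  have h4 : d * (- g') <= d * (c * g) by rewrite key opprK; apply: ler_wpM2l.
  move: h1 h2; rewrite !ler_norml => /andP [h1a h1b] /andP [h2a h2b].
  have h5 : c * (d * g) <= c * (E h (phi (s t.+1)) - E h (phi (s t)) + K * d^2).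
    by apply: ler_wpM2l => //; lra.
  rewrite -natr1.
  lra.
have := inv N (leqnn N); rewrite ON.
have F0 : 0 <= E h (phi (s 0%N)) by apply: E_ge0 => //; exact: sP.
have cF0 : 0 <= c * E h (phi (s 0%N)) by apply: mulr_ge0.
have NK : N%:R * (K * d^2) = K * d.
  have Nn : (N%:R : R) != 0 by rewrite pnatr_eq0 -lt0n.
  by rewrite /d -exprnP expr2; field.
rewrite -mulrA NK => H.
rewrite /K in H; lra.
Qed.

Lemma E_e h (J : 'I_n -> 'I_k) (e : 'M[R]_(n,k)) : (forall i j, e i j = (j == J i)%:R) ->
  E h (phi e) = h [ffun i => Some (J i)].
Proof.
move=> He.
have pe i o : phi e i o = (o == Some (J i))%:R.
  case: o => [j|] /=; first by rewrite He.
  rewrite (bigD1 (J i)) //= He eqxx big1 ?addr0 ?subrr // => j /negbTE jJ.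
  by rewrite He jJ.
rewrite /E (bigD1 [ffun i => Some (J i)]) //=.
rewrite [X in _ + X]big1 ?addr0; last first.
  move=> S HS.
  have /existsP [i Hi] : [exists i, S i != Some (J i)].
    rewrite -negb_forall; apply: contra HS => /forallP H.
    by apply/eqP/ffunP => i; rewrite ffunE; apply/eqP; exact: H.
  by rewrite (bigD1 i) //= pe (negbTE Hi) mul0r mulr0.
by rewrite big1 ?mulr1 // => i _; rewrite pe ffunE eqxx.
Qed.

End Proof.

Theorem mainTheorem5 (R : realType) (n k : nat) (f : kset n k -> R) (c : R) :
  (2 <= k)%N ->
  (forall S, 0 <= f S) ->
  kmonotone f ->
  ksubmodular f ->
  0 < c ->
  forall eps : R, 0 < eps ->
  exists N0 : nat, forall N : nat, (N0 <= N)%N -> (0 < N)%N ->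
  forall v : nat -> 'M[R]_(n, k),
    (forall t, (t < N)%N ->
       direction (v t) /\
       good_direction c (gradient (multilinear_ext f) (traj N v t)) (v t)) ->
    (c + 1)^-1 * OPT f - eps <= multilinear_ext f (traj N v N).
Proof.
move=> k2 f0 fm fs c0 eps e0.
have k0 : (0 < k)%N by apply: leq_trans k2.
pose j0 : 'I_k := Ordinal k0.
pose S00 : kset n k := [ffun _ => None].
case: (@arg_maxP _ R (kset n k) S00 xpredT f isT) => S0 _ HS0.
pose J := fun i => match S0 i with Some j => j | None => j0 end.
have OS0 : OPT f <= f S0.
  rewrite /OPT; apply: (big_ind (fun y => y <= f S0)).
  - exact: f0.
  - by move=> a b ha hb; rewrite ge_max ha hb.
  - by move=> S _; apply: HS0.
have S0J : f S0 <= f [ffun i => Some (J i)].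
  apply: fm => j'; apply/fintype.subsetP => r; rewrite !inE ffunE /J.
  by case: (S0 r) => // a.
pose e : 'M[R]_(n,k) := \matrix_(i, j) (j == J i)%:R.
have He i j : e i j = (j == J i)%:R by rewrite mxE.
pose K := Kc R n k f.
exists (Num.Def.trunc (K / eps)).+1.
move=> N NN0 N0 v hv.
have := main_bound R n k f c N v J e fm fs f0 (ltW c0) N0 He hv.
rewrite (E_e R n k f J e He).
change (E R n k f (phi R n k (traj N v N))) with (multilinear_ext f (traj N v N)).
set F := multilinear_ext f (traj N v N).
move=> H.
have Npos : (0 : R) < N%:R by rewrite ltr0n.
have Kd : K * N%:R^-1 <= eps.
  have H1 := truncnS_gt (K / eps).
  have H2 : (Num.Def.trunc (K / eps)).+1%:R <= (N%:R : R) by rewrite ler_nat.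
  have H3 : K / eps < N%:R by apply: lt_le_trans H2.
  move: H3; rewrite ltr_pdivrMr // => H3.
  rewrite -/(K / N%:R) ler_pdivrMr //; lra.
have c1 : 0 < c + 1 by lra.
have H4 : OPT f <= (c + 1) * (F + K * N%:R^-1) by rewrite mulrDr; rewrite /K; lra.
have H5 : (c + 1)^-1 * OPT f <= F + K * N%:R^-1.
  by rewrite mulrC ler_pdivrMr // mulrC.
lra.
Qed.
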